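(* Let $\mathcal D$ be a finite nonempty set. Let $\Psi:\mathcal H^{\mathcal D}_{P,R}\to(\mathcal H^{\mathcal D}_{P,R})^{*g}$ be the unique Hopf algebra morphism such that $\Psi\circ B_d^+=\gamma_d^{*g}\circ\Psi$ for all $d\in\mathcal D$ (such a morphism exists and is unique). Then $\Psi$ is an isomorphism of graded Hopf algebras.
   Context: $\mathcal H^{\mathcal D}_{P,R}$ is the Hopf algebra of planar rooted trees decorated by $\mathcal D$: the free associative unital $\mathbb Q$-algebra on the set of planar rooted trees (finite trees with a root, embedded in the plane, edges oriented away from the root) whose vertices carry decorations in $\mathcal D$; the basis is the set of planar forests $t_1\cdots t_n$ ($1$ = empty forest). Coproduct: $\Delta(F)=\sum_cP^c(F)\otimes R^c(F)$ over all cuts $c$ of $F=t_1\cdots t_n$, where a cut is a tuple $(c_i)$, each $c_i$ being either the empty cut of $t_i$ ($P=1,R=t_i$), the total cut ($P=t_i,R=1$), or an admissible cut, i.e. a nonempty set of edges of $t_i$ such that every oriented path meets at most one of them, with $R^{c_i}(t_i)$ the component of the root and $P^{c_i}(t_i)$ the left-to-right planar forest of the other components; $P^c(F)=\prod_iP^{c_i}(t_i)$, $R^c(F)=\prod_iR^{c_i}(t_i)$. Counit: $\varepsilon(F)=0$ for $F\ne1$. It is graded by weight (number of vertices), with finite-dimensional components. $B_d^+$ grafts a forest $t_1\cdots t_n$ (in this order) on a new root decorated by $d$, and $\bullet_d=B_d^+(1)$. For a graded Hopf algebra $A=\bigoplus_nA_n$ with $A_0$ one-dimensional and finite-dimensional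 $A_n$, the graded dual $A^{*g}=\bigoplus_nA_n^*$ is the graded Hopf algebra with $(fg)(x)=(f\otimes g)(\Delta(x))$, unit $\varepsilon$, $\Delta(f)(x\otimes y)=f(xy)$, counit $f\mapsto f(1)$, antipode $f\mapsto f\circ S$, $(A^{*g})_n=A_n^*$. Define the linear map $\gamma_d:\mathcal H^{\mathcal D}_{P,R}\to\mathcal H^{\mathcal D}_{P,R}$ by $\gamma_d(1)=0$, $\gamma_d(t_1\cdots t_n)=t_1\cdots t_{n-1}$ if $t_n=\bullet_d$ and $0$ otherwise, and $\gamma_d^{*g}(f)=f\circ\gamma_d$ its transpose on the graded dual. *)

(* Defs.v *)
From HB Require Import structures.
From mathcomp Require Import all_boot all_order all_algebra.
From mathcomp Require Import finmap.
From mathcomp.multinomials Require Import monalg.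

Set Implicit Arguments.
Unset Strict Implicit.
Unset Printing Implicit Defensive.

Import GRing.Theory.
Local Open Scope ring_scope.

(* Planar rooted trees decorated by D: a root decorated by d, followed  *)
(* by the (left-to-right ordered) sequence of its subtrees.             *)
Inductive ptree (D : Type) : Type := PNode of D & seq (ptree D).
Arguments PNode {D} d ch.

Section PTreeCount.
Variable D : countType.

Fixpoint ptree_enc (t : ptree D) : GenTree.tree D :=
  let: PNode d ch := t in GenTree.Node 0 (GenTree.Leaf d :: map ptree_enc ch).

Fixpoint ptree_dec (g : GenTree.tree D) : option (ptree D) :=
  match g with
  | GenTree.Node 0 (GenTree.Leaf d :: ch) =>
      Some (PNode d (pmap ptree_dec ch))
  | _ => None
  end.

Lemma ptree_encK : pcancel ptree_enc ptree_dec.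
Proof.
rewrite /pcancel; fix IH 1 => -[d ch] /=; congr (Some (PNode d _)).
elim: ch => //= t ch IHch.
by rewrite IH /= IHch.
Qed.

HB.instance Definition _ := Countable.copy (ptree D) (pcan_type ptree_encK).
End PTreeCount.

Fixpoint tweight (D : Type) (t : ptree D) : nat :=
  let: PNode _ ch := t in (sumn (map (@tweight D) ch)).+1.

(* Planar forests t_1 ... t_n = words in trees (free monoid on trees);  *)
(* the empty forest is the unit 1.                                      *)
Definition forest (D : finType) := {fmonom ptree D}.

Definition fweight (D : finType) (F : forest D) : nat :=
  sumn (map (@tweight D) (fmonom_val F)).

(* The algebra H^D_{P,R}: free associative unital Q-algebra on trees,  *)
(* i.e. the monoid algebra of the free monoid of planar forests.        *)
Definition HPR (D : finType) := {malg rat[forest D]}.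

(* The graded dual (H^D_{P,R})^{*g}.  Since every homogeneous component *)
(* is finite dimensional with basis the forests of that weight, an      *)
(* element f of the graded dual is the same as a finitely supported     *)
(* function on forests (its values on the basis); we store it as such.  *)
Definition HPRgd (D : finType) := {malg rat[forest D]}.
Definition dval (D : finType) (f : HPRgd D) (F : forest D) : rat := f@_F.

Definition prodseq (A : Type) (ls : seq (seq A)) : seq (seq A) :=
  foldr (fun l acc => [seq x :: y | x <- l, y <- acc]) [:: [::]] ls.

(* [rootcuts t]: the cuts of t that are either the empty cut or an      *)
(* admissible cut, listed with multiplicity as pairs (P^c(t), R^c(t)).  *)
(* For t = B_d^+(t_1 ... t_k), such a cut is given by choosing, for     *)
(* every child t_i, either to cut the edge from the root to t_i (t_i    *)
(* then goes entirely to P and no edge below it may be cut) or to keep  *)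
(* it and choose recursively such a cut of t_i.  P is the left-to-right *)
(* concatenation of the cut-off pieces and R the component of the root. *)
Fixpoint rootcuts (D : Type) (t : ptree D) : seq (seq (ptree D) * ptree D) :=
  let: PNode d ch := t in
  [seq (flatten (map fst s), PNode d (pmap snd s))
  | s <- prodseq
           (map (fun c => ([:: c], None) ::
                          [seq (pr.1, Some pr.2) | pr <- rootcuts c]) ch)].

(* all cuts of a tree: total cut, then empty/admissible cuts *)
Definition tcuts (D : Type) (t : ptree D) : seq (seq (ptree D) * seq (ptree D)) :=
  ([:: t], [::]) :: [seq (pr.1, [:: pr.2]) | pr <- rootcuts t].

Definition cuts (D : finType) (F : forest D) : seq (forest D * forest D) :=
  [seq (FMonom (flatten (map fst s)), FMonom (flatten (map snd s)))
  | s <- prodseq (map (@tcuts D) (fmonom_val F))].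

(* algebra morphism: Psi(1) = counit of H (the unit of H^{*g}) and      *)
(* Psi(xy) = Psi(x) Psi(y), where (fg)(F) = (f (x) g)(Delta F).         *)
Definition is_alg_morph (D : finType) (Psi : HPR D -> HPRgd D) : Prop :=
  (forall F : forest D, dval (Psi 1) F = (F == (mone : forest D))%:R) /\
  (forall (x y : HPR D) (F : forest D),
      dval (Psi (x * y)) F =
      \sum_(c <- cuts F) dval (Psi x) c.1 * dval (Psi y) c.2).

(* coalgebra morphism: counit of H^{*g} (f |-> f(1)) composed with Psi  *)
(* is the counit of H, and Delta(Psi K) = (Psi (x) Psi)(Delta K), both  *)
(* sides evaluated on F (x) G, where Delta(f)(F (x) G) = f(FG).         *)
Definition is_coalg_morph (D : finType) (Psi : HPR D -> HPRgd D) : Prop :=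
  (forall x : HPR D, dval (Psi x) (mone : forest D) = x@_(mone : forest D)) /\
  (forall K F G : forest D,
      dval (Psi << K >>) (mmul F G) =
      \sum_(c <- cuts K) dval (Psi << c.1 >>) F * dval (Psi << c.2 >>) G).

(* A Hopf algebra morphism is a bialgebra morphism (compatibility with  *)
(* the antipodes is then automatic).                                   *)
Definition is_hopf_morph (D : finType) (Psi : {linear HPR D -> HPRgd D}) : Prop :=
  is_alg_morph Psi /\ is_coalg_morph Psi.

Definition Bplus (D : finType) (d : D) (x : HPR D) : HPR D :=
  \sum_(F <- msupp x) x@_F *: << (FMonom [:: PNode d (fmonom_val F)] : forest D) >>.

(* gamma_d on forests: t_1...t_{n-1} if t_n = bullet_d, else 0 (None) *)
Definition gamma (D : finType) (d : D) (F : forest D) : option (forest D) :=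
  match rev (fmonom_val F) with
  | t :: r => if t == PNode d [::] then Some (FMonom (rev r)) else None
  | [::] => None
  end.

Definition gamma_gd (D : finType) (d : D) (f : HPRgd D) (F : forest D) : rat :=
  if gamma d F is Some F' then dval f F' else 0.

Definition Bplus_compat (D : finType) (Psi : {linear HPR D -> HPRgd D}) : Prop :=
  forall (d : D) (x : HPR D) (F : forest D),
    dval (Psi (Bplus d x)) F = gamma_gd d (Psi x) F.

Definition is_graded (D : finType) (Psi : {linear HPR D -> HPRgd D}) : Prop :=
  forall F G : forest D, dval (Psi << F >>) G != 0 -> fweight G = fweight F.

(* Main.v *)
Require Import Defs.
From HB Require Import structures.
From mathcomp Require Import all_boot all_order all_algebra.
From mathcomp Require Import finmap.
From mathcomp.multinomials Require Import monalg.
From mathcomp Require Import zify ring lra.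
Set Implicit Arguments.
Unset Strict Implicit.
Unset Printing Implicit Defensive.
Import GRing.Theory.
Local Open Scope ring_scope.
Section Cuts.
Variable D : finType.
Local Notation T := (ptree D).

Definition wt (s : seq T) : nat := sumn (map (@tweight D) s).

Lemma wt_cat s1 s2 : wt (s1 ++ s2) = (wt s1 + wt s2)%N.
Proof. by rewrite /wt map_cat sumn_cat. Qed.

Lemma wt_cons t s : wt (t :: s) = (tweight t + wt s)%N.
Proof. by []. Qed.

Lemma tweightE d ch : tweight (PNode d ch) = (wt ch).+1.
Proof. by []. Qed.

Lemma wt_eq0 s : wt s = 0%N -> s = [::].
Proof. by case: s => // [[d ch] s]; rewrite wt_cons tweightE. Qed.

Lemma prodseq_cat (A : Type) (l1 l2 : seq (seq A)) :
  prodseq (l1 ++ l2) = [seq x ++ y | x <- prodseq l1, y <- prodseq l2].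
Proof.
elim: l1 => [|l l1 IH] /=.
  by rewrite cats0 map_id.
rewrite IH; elim: l => [|x l IHl] //=.
rewrite allpairs_cat IHl; congr (_ ++ _).
by rewrite map_allpairs allpairs_mapl.
Qed.

Definition proj (s : seq (seq T * seq T)) := (flatten (map fst s), flatten (map snd s)).

Definition cutsS (s : seq T) : seq (seq T * seq T) :=
  map proj (prodseq (map (@tcuts D) s)).

Lemma cutsE (F : forest D) :
  cuts F = map (fun c => (FMonom c.1, FMonom c.2)) (cutsS F).
Proof. by rewrite /cuts /cutsS -map_comp. Qed.

Lemma cutsS_nil : cutsS [::] = [:: ([::], [::])].
Proof. by []. Qed.

Lemma cutsS_cat s1 s2 :
  cutsS (s1 ++ s2) = [seq (a.1 ++ b.1, a.2 ++ b.2) | a <- cutsS s1, b <- cutsS s2].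
Proof.
rewrite /cutsS map_cat prodseq_cat map_allpairs allpairs_mapl allpairs_mapr.
apply: eq_allpairs => x y.
by rewrite /proj !map_cat !flatten_cat.
Qed.

Definition opt2seq (o : option T) : seq T := if o is Some x then [:: x] else [::].
Definition phi (p : seq T * option T) := (p.1, opt2seq p.2).

Lemma prodseq_map (A B : Type) (f : A -> B) (L : seq (seq A)) :
  prodseq (map (map f) L) = map (map f) (prodseq L).
Proof.
elim: L => [|l L IH] //=; rewrite IH allpairs_mapl allpairs_mapr map_allpairs //.
Qed.

Lemma cutsS_tree d ch :
  cutsS [:: PNode d ch] =
  ([:: PNode d ch], [::]) :: [seq (c.1, [:: PNode d c.2]) | c <- cutsS ch].
Proof.
rewrite /cutsS /= allpairs1r /= /proj /=; congr (_ :: _).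
rewrite -!map_comp.
set h := (fun c : T => ([:: c], None) :: [seq (pr.1, Some pr.2) | pr <- rootcuts c]).
have -> : map (@tcuts D) ch = map (map phi) (map h ch).
  rewrite -map_comp; apply: eq_map => c /=; rewrite /tcuts /h /= -map_comp.
  by congr (_ :: _); apply: eq_map => -[].
rewrite prodseq_map -map_comp; apply: eq_map => s /=.
rewrite !cats0 -map_comp; congr (_, _).
congr [:: PNode d _]; elim: s => // -[a [x|]] s /= -> //.
Qed.

Lemma cutsS_cons t s :
  cutsS (t :: s) = [seq (a.1 ++ b.1, a.2 ++ b.2) | a <- cutsS [:: t], b <- cutsS s].
Proof. by rewrite -cutsS_cat. Qed.

Lemma forest_ind (P : seq T -> Prop) :
  P [::] ->
  (forall d ch s, P ch -> P s -> P (PNode d ch :: s)) ->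
  forall s, P s.
Proof.
move=> P0 PS s; have [n] := ubnP (wt s); elim: n s => // n IH [|[d ch] s] //.
rewrite ltnS wt_cons tweightE => H.
by apply: PS; apply: IH; lia.
Qed.

Lemma cutsS_wt s c : c \in cutsS s -> (wt c.1 + wt c.2)%N = wt s.
Proof.
elim/forest_ind: s c => [|d ch s IHch IHs] c; first by rewrite inE => /eqP ->.
rewrite cutsS_cons => /allpairsP [[[a1 a2] [b1 b2]] [/= + + ->]] /=.
rewrite cutsS_tree inE => /predU1P [[-> ->]|] /=.
  by move=> /IHs /= H; rewrite !wt_cons; lia.
move=> /mapP [[c1 c2] /IHch /= H1 [-> ->]] /IHs /= H2.
rewrite !wt_cat !wt_cons tweightE.
rewrite tweightE.
lia.
Qed.

End Cuts.
Section Sums.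
Variable D : finType.
Local Notation T := (ptree D).

Lemma sum_cat (f : seq T * seq T -> rat) s1 s2 :
  \sum_(c <- cutsS (s1 ++ s2)) f c =
  \sum_(a <- cutsS s1) \sum_(b <- cutsS s2) f (a.1 ++ b.1, a.2 ++ b.2).
Proof. by rewrite cutsS_cat big_allpairs_dep. Qed.

Lemma sum_cons (f : seq T * seq T -> rat) t s :
  \sum_(c <- cutsS (t :: s)) f c =
  \sum_(a <- cutsS [:: t]) \sum_(b <- cutsS s) f (a.1 ++ b.1, a.2 ++ b.2).
Proof. by rewrite -sum_cat. Qed.

Lemma sum_tree (f : seq T * seq T -> rat) d ch :
  \sum_(c <- cutsS [:: PNode d ch]) f c =
  f ([:: PNode d ch], [::]) + \sum_(c <- cutsS ch) f (c.1, [:: PNode d c.2]).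
Proof. by rewrite cutsS_tree big_cons big_map. Qed.

Lemma sum_nil (f : seq T * seq T -> rat) :
  \sum_(c <- cutsS [::]) f c = f ([::], [::]).
Proof. by rewrite cutsS_nil big_seq1. Qed.

Lemma counitL (s : seq T) (h : seq T -> rat) :
  \sum_(c <- cutsS s) (c.1 == [::])%:R * h c.2 = h s.
Proof.
elim/forest_ind: s h => [|d ch s IHch IHs] h; first by rewrite sum_nil mul1r.
rewrite sum_cons.
transitivity (\sum_(a <- cutsS [:: PNode d ch]) (a.1 == [::])%:R * h (a.2 ++ s)).
  apply: eq_bigr => a _.
  rewrite -(IHs (fun x => h (a.2 ++ x))) big_distrr /=.
  apply: eq_bigr => -[b1 b2] _; case: a => [a1 a2] /=.
  by case: a1 => [|? ?]; case: b1 => [|? ?] /=; rewrite ?mul1r ?mul0r.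
rewrite sum_tree /= mul0r add0r.
exact: (IHch (fun x => h (PNode d x :: s))).
Qed.

Lemma counitR (s : seq T) (h : seq T -> rat) :
  \sum_(c <- cutsS s) h c.1 * (c.2 == [::])%:R = h s.
Proof.
elim: s h => [|t s IHs] h; first by rewrite sum_nil mulr1.
case: t => d ch; rewrite sum_cons.
transitivity (\sum_(a <- cutsS [:: PNode d ch]) h (a.1 ++ s) * (a.2 == [::])%:R).
  apply: eq_bigr => a _.
  rewrite -(IHs (fun x => h (a.1 ++ x))) big_distrl /=.
  apply: eq_bigr => -[b1 b2] _; case: a => [a1 a2] /=.
  by case: a2 => [|? ?]; case: b2 => [|? ?] /=; rewrite ?mulr1 ?mulr0.
rewrite sum_tree /= mulr1 big1 ?addr0 // => c _; by rewrite mulr0.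
Qed.

Lemma cutsS_P0 (s : seq T) (c : seq T * seq T) : c \in cutsS s -> c.1 = [::] -> c.2 = s.
Proof.
elim/forest_ind: s c => [|d ch s IHch IHs] c; first by rewrite inE => /eqP ->.
rewrite cutsS_cons => /allpairsP [[[a1 a2] [b1 b2]] [/= + + ->]] /=.
rewrite cutsS_tree inE => /predU1P [[-> ->]|] //=.
move=> /mapP [[c1 c2] /IHch /= H1 [-> ->]] /IHs /= H2.
by case: c1 H1 => // /(_ erefl) -> /(H2) ->.
Qed.

Lemma cutsS_R0 (s : seq T) (c : seq T * seq T) : c \in cutsS s -> c.2 = [::] -> c.1 = s.
Proof.
elim: s c => [|[d ch] s IHs] c; first by rewrite inE => /eqP ->.
rewrite cutsS_cons => /allpairsP [[[a1 a2] [b1 b2]] [/= + + ->]] /=.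
rewrite cutsS_tree inE => /predU1P [[-> ->]|] /=.
  by move=> /IHs /= H [] /H ->.
by move=> /mapP [[c1 c2] _ [_ ->]].
Qed.

Definition coassoc_at (s : seq T) := forall f : seq T -> seq T -> seq T -> rat,
  \sum_(c <- cutsS s) \sum_(c' <- cutsS c.1) f c'.1 c'.2 c.2 =
  \sum_(c <- cutsS s) \sum_(c' <- cutsS c.2) f c.1 c'.1 c'.2.

Lemma coassoc_tree d ch : coassoc_at ch -> coassoc_at [:: PNode d ch].
Proof.
move=> IH f; rewrite !sum_tree /= sum_nil /=.
rewrite -addrA; congr (_ + _).
rewrite [RHS](eq_bigr (fun c => f c.1 [:: PNode d c.2] [::] +
   \sum_(c' <- cutsS c.2) f c.1 c'.1 [:: PNode d c'.2])); last by move=> c _; rewrite sum_tree.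
rewrite big_split /=; congr (_ + _).
exact: (IH (fun x y z => f x y [:: PNode d z])).
Qed.

Lemma coassoc_cat (s1 s2 : seq T) : coassoc_at s1 -> coassoc_at s2 -> coassoc_at (s1 ++ s2).
Proof.
move=> H1 H2 f; rewrite !sum_cat.
transitivity (\sum_(a <- cutsS s1) \sum_(x <- cutsS a.1)
   \sum_(b <- cutsS s2) \sum_(y <- cutsS b.1)
     f (x.1 ++ y.1) (x.2 ++ y.2) (a.2 ++ b.2)).
  apply: eq_bigr => a _; rewrite [RHS]exchange_big /=; apply: eq_bigr => b _.
  by rewrite sum_cat.
transitivity (\sum_(a <- cutsS s1) \sum_(x <- cutsS a.1)
   \sum_(b <- cutsS s2) \sum_(y <- cutsS b.2)
     f (x.1 ++ b.1) (x.2 ++ y.1) (a.2 ++ y.2)).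
  apply: eq_bigr => a _; apply: eq_bigr => x _.
  exact: (H2 (fun u v w => f (x.1 ++ u) (x.2 ++ v) (a.2 ++ w))).
transitivity (\sum_(b <- cutsS s2) \sum_(a <- cutsS s1) \sum_(x <- cutsS a.1)
   \sum_(y <- cutsS b.2) f (x.1 ++ b.1) (x.2 ++ y.1) (a.2 ++ y.2)).
  rewrite [RHS]exchange_big /=; apply: eq_bigr => a _.
  by rewrite [RHS]exchange_big.
transitivity (\sum_(b <- cutsS s2) \sum_(a <- cutsS s1) \sum_(x <- cutsS a.2)
   \sum_(y <- cutsS b.2) f (a.1 ++ b.1) (x.1 ++ y.1) (x.2 ++ y.2)).
  apply: eq_bigr => b _.
  exact: (H1 (fun u v w => \sum_(y <- cutsS b.2) f (u ++ b.1) (v ++ y.1) (w ++ y.2))).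
rewrite [LHS]exchange_big /=; apply: eq_bigr => a _; apply: eq_bigr => b _.
by rewrite sum_cat.
Qed.

Lemma coassoc (s : seq T) : coassoc_at s.
Proof.
elim/forest_ind: s => [|d ch s IHch IHs].
  by move=> f; rewrite !sum_nil /= ?sum_nil.
by rewrite -cat1s; apply: coassoc_cat => //; apply: coassoc_tree.
Qed.

End Sums.
Section Pairing.
Variable D : finType.
Local Notation T := (ptree D).

Definition gammaS (d : D) (s : seq T) : option (seq T) :=
  match rev s with
  | t :: r => if t == PNode d [::] then Some (rev r) else None
  | [::] => None
  end.

Lemma gammaS_nil d : gammaS d [::] = None.
Proof. by []. Qed.

Lemma gammaS_rcons d s t :
  gammaS d (rcons s t) = if t == PNode d [::] then Some s else None.
Proof. by rewrite /gammaS rev_rcons revK. Qed.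

Lemma gammaS_Some d s s' : gammaS d s = Some s' -> s = rcons s' (PNode d [::]).
Proof.
case/lastP: s => [|s t] //; rewrite gammaS_rcons.
by case: eqP => // -> [->].
Qed.

Lemma gammaS_catr d A B : B != [::] ->
  gammaS d (A ++ B) = omap (cat A) (gammaS d B).
Proof.
case/lastP: B => [|B u] // _; rewrite -rcons_cat !gammaS_rcons.
by case: eqP.
Qed.

Fixpoint prt (t : T) (G : seq T) {struct t} : rat :=
  let: PNode d ch := t in
  if gammaS d G is Some G' then
    (fix prf (F G : seq T) {struct F} : rat :=
       if F is t' :: F' then \sum_(c <- cutsS G) prt t' c.1 * prf F' c.2
       else (G == [::])%:R) ch G'
  else 0.

Fixpoint pr (F G : seq T) {struct F} : rat :=
  if F is t :: F' then \sum_(c <- cutsS G) prt t c.1 * pr F' c.2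
  else (G == [::])%:R.

Lemma prtE d ch G :
  prt (PNode d ch) G = if gammaS d G is Some G' then pr ch G' else 0.
Proof. by []. Qed.

Lemma prt_nil t : prt t [::] = 0.
Proof. by case: t. Qed.

Lemma pr_nil G : pr [::] G = (G == [::])%:R.
Proof. by []. Qed.

Lemma pr_cons t F G : pr (t :: F) G = \sum_(c <- cutsS G) prt t c.1 * pr F c.2.
Proof. by []. Qed.

Lemma pr1 t G : pr [:: t] G = prt t G.
Proof. by rewrite pr_cons (counitR G (prt t)). Qed.

Lemma pr_G0 F : pr F [::] = (F == [::])%:R.
Proof. by case: F => [|t F] //; rewrite pr_cons sum_nil prt_nil mul0r. Qed.

Arguments prt : simpl never.
Arguments pr : simpl never.

Lemma pr_cat F1 F2 G :
  pr (F1 ++ F2) G = \sum_(c <- cutsS G) pr F1 c.1 * pr F2 c.2.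
Proof.
elim: F1 G => [|t F1 IH] G; rewrite /= ?pr_cons.
  by rewrite (counitL G (pr F2)).
transitivity (\sum_(c <- cutsS G) \sum_(c' <- cutsS c.2)
                 prt t c.1 * pr F1 c'.1 * pr F2 c'.2).
  by apply: eq_bigr => c _; rewrite IH mulr_sumr; apply: eq_bigr => c' _; rewrite mulrA.
transitivity (\sum_(c <- cutsS G) \sum_(c' <- cutsS c.1)
                 prt t c'.1 * pr F1 c'.2 * pr F2 c.2).
  exact: (esym (coassoc G (fun x y z => prt t x * pr F1 y * pr F2 z))).
by apply: eq_bigr => c _; rewrite mulr_suml.
Qed.

Lemma pr_tree_coalg d ch :
  (forall A B, pr ch (A ++ B) = \sum_(c <- cutsS ch) pr c.1 A * pr c.2 B) ->
  forall A B, pr [:: PNode d ch] (A ++ B) =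
     \sum_(c <- cutsS [:: PNode d ch]) pr c.1 A * pr c.2 B.
Proof.
move=> IH A B; rewrite sum_tree /= !pr1 !pr_nil.
under eq_bigr => c _ do rewrite pr1.
case: (altP (B =P [::])) => [->|Bn0].
  rewrite cats0 mulr1 big1 ?addr0 // => c _; by rewrite prt_nil mulr0.
rewrite mulr0 add0r; move: Bn0; case/lastP: B => [|B u] // _.
rewrite -rcons_cat prtE gammaS_rcons.
under eq_bigr => c _ do rewrite prtE gammaS_rcons.
case: eqP => _; first by rewrite IH.
by rewrite big1 // => c _; rewrite mulr0.
Qed.

Lemma pr_coalg K A B :
  pr K (A ++ B) = \sum_(c <- cutsS K) pr c.1 A * pr c.2 B.
Proof.
elim/forest_ind: K A B => [|d ch K IHch IHK] A B.
  rewrite sum_nil /= !pr_nil.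
  by case: A => [|? ?]; case: B => [|? ?]; rewrite /= ?mulr1 ?mulr0 ?mul0r.
rewrite -cat1s pr_cat sum_cat sum_cat.
transitivity (\sum_(a <- cutsS A) \sum_(b <- cutsS B)
   (\sum_(x <- cutsS [:: PNode d ch]) pr x.1 a.1 * pr x.2 b.1) *
   (\sum_(y <- cutsS K) pr y.1 a.2 * pr y.2 b.2)).
  apply: eq_bigr => a _; apply: eq_bigr => b _.
  by rewrite (@pr_tree_coalg d ch IHch) IHK.
transitivity (\sum_(x <- cutsS [:: PNode d ch]) \sum_(y <- cutsS K)
   (\sum_(a <- cutsS A) pr x.1 a.1 * pr y.1 a.2) *
   (\sum_(b <- cutsS B) pr x.2 b.1 * pr y.2 b.2)).
  under eq_bigr => a _ do under eq_bigr => b _ do rewrite mulr_suml /=.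
  under eq_bigr => a _ do under eq_bigr => b _ do under eq_bigr => x _ do rewrite mulr_sumr /=.
  under [RHS]eq_bigr => x _ do under eq_bigr => y _ do rewrite mulr_suml /=.
  under [RHS]eq_bigr => x _ do under eq_bigr => y _ do under eq_bigr => a _ do rewrite mulr_sumr /=.
  under eq_bigr => a _ do rewrite exchange_big /=.
  rewrite exchange_big /=; apply: eq_bigr => x _.
  under eq_bigr => a _ do rewrite exchange_big /=.
  rewrite exchange_big /=; apply: eq_bigr => y _.
  apply: eq_bigr => a _; apply: eq_bigr => b _.
  by rewrite mulrACA.
apply: eq_bigr => x _; apply: eq_bigr => y _.
by rewrite !pr_cat.
Qed.

Lemma sum_neq0 (I : eqType) (r : seq I) (F : I -> rat) :
  \sum_(i <- r) F i != 0 -> exists2 i, i \in r & F i != 0.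
Proof.
elim: r => [|i r IH]; first by rewrite big_nil eqxx.
rewrite big_cons; case: (altP (F i =P 0)) => [->|Fi]; last by exists i; rewrite ?mem_head.
by rewrite add0r => /IH [j jr Fj]; exists j; rewrite ?inE ?jr ?orbT.
Qed.

Lemma pr_graded F G : pr F G != 0 -> wt G = wt F.
Proof.
elim/forest_ind: F G => [|d ch F IHch IHF] G.
  by rewrite pr_nil; case: G => //; rewrite eqxx.
rewrite pr_cons => /sum_neq0 [[c1 c2] /cutsS_wt /= Hw].
rewrite mulf_eq0 negb_or prtE => /andP [].
case E: gammaS => [G'|]; last by rewrite eqxx.
move=> /IHch H1 /IHF H2; move/gammaS_Some: E => E.
rewrite -Hw H2 wt_cons tweightE E -cats1 wt_cat -H1 /wt /=; lia.
Qed.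

End Pairing.
Section Enum.
Variable D : finType.
Local Notation T := (ptree D).

Fixpoint fl (k n : nat) : seq (seq T) :=
  if k is k'.+1 then
    if n is 0 then [:: [::]] else
    flatten [seq flatten [seq [seq PNode d F :: R | F <- fl k' m, R <- fl k' (n - m.+1)]
                         | d <- enum D] | m <- iota 0 n]
  else if n is 0 then [:: [::]] else [::].

Lemma fl_complete k n s : wt s = n -> (n <= k)%N -> s \in fl k n.
Proof.
elim: k n s => [|k IH] n s.
  by case: n => // /wt_eq0 -> _; rewrite mem_seq1.
case: n => [/wt_eq0 -> _|n]; first by rewrite mem_seq1.
case: s => [|[d F] R] //; rewrite wt_cons tweightE => Hw Hk.
apply/flattenP; exists (flatten [seq [seq PNode d0 F0 :: R0 | F0 <- fl k (wt F), R0 <- fl k (n.+1 - (wt F).+1)] | d0 <- enum D]).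
  by apply/mapP; exists (wt F) => //; rewrite mem_iota; lia.
apply/flattenP; exists [seq PNode d F0 :: R0 | F0 <- fl k (wt F), R0 <- fl k (n.+1 - (wt F).+1)].
  by apply/mapP; exists d => //; rewrite mem_enum.
apply/allpairsP; exists (F, R) => /=; split => //; apply: IH => //; lia.
Qed.

Definition fenum (n : nat) : seq (forest D) :=
  [seq F <- undup (map (@FMonom _) (fl n n)) | fweight F == n].

Lemma fweightE (F : forest D) : fweight F = wt F.
Proof. by []. Qed.

Lemma fenum_uniq n : uniq (fenum n).
Proof. by rewrite filter_uniq ?undup_uniq. Qed.

Lemma mem_fenum n (F : forest D) : (F \in fenum n) = (fweight F == n).
Proof.
rewrite mem_filter andb_idr // => /eqP <-.
rewrite mem_undup; apply/mapP; exists (fmonom_val F); last by case: F.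
by apply: fl_complete.
Qed.

Definition prF (F G : forest D) : rat := pr F G.

Definition psi0 (F : forest D) : HPRgd D :=
  \sum_(G <- fenum (fweight F)) prF F G *: << G >>.

Lemma psi0E F G : (psi0 F)@_G = prF F G.
Proof.
rewrite /psi0 raddf_sum /=.
under eq_bigr => H _ do rewrite mcoeffZ mcoeffU1.
case: (boolP (G \in fenum (fweight F))) => HG.
  rewrite (bigD1_seq G) //= ?fenum_uniq // eqxx mulr1 big1 ?addr0 // => H /negPf.
  by rewrite eq_sym => ->; rewrite mulr0.
rewrite big1_seq; last first.
  by move=> H /andP [_ HH]; case: eqP HH HG => [->->//|]; rewrite mulr0.
apply/esym/eqP; apply: contraR HG => /pr_graded HG.
by rewrite mem_fenum fweightE HG.
Qed.

Definition Psi (x : HPR D) : HPRgd D := \sum_(F <- msupp x) x@_F *: psi0 F.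

Arguments Psi : simpl never.

Lemma PsiEw (d : {fset forest D}) x G : (msupp x `<=` d)%fset ->
  (Psi x)@_G = \sum_(F <- d) x@_F * prF F G.
Proof.
move=> le; rewrite /Psi raddf_sum /=.
under eq_bigr => F _ do rewrite mcoeffZ psi0E.
rewrite (big_fset_incl _ le) //= => F _ /mcoeff_outdom ->; by rewrite mul0r.
Qed.

Lemma PsiE x G : (Psi x)@_G = \sum_(F <- msupp x) x@_F * prF F G.
Proof. exact: PsiEw. Qed.

Lemma Psi_linear : linear_for *:%R Psi.
Proof.
move=> a x y; apply/malgP => G.
set d := (msupp x `|` msupp y `|` msupp (a *: x + y))%fset.
rewrite (@PsiEw d) ?fsubsetUr // mcoeffD mcoeffZ (@PsiEw d x) ?(@PsiEw d y); last 2 first.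
- by apply/fsubsetP => z Hz; rewrite /d !inE Hz ?orbT.
- by apply/fsubsetP => z Hz; rewrite /d !inE Hz ?orbT.
rewrite mulr_sumr -big_split /=; apply: eq_bigr => F _.
by rewrite mcoeffD mcoeffZ mulrDl mulrA.
Qed.

End Enum.

HB.instance Definition _ (D : finType) :=
  GRing.isLinear.Build rat (HPR D) (HPRgd D) *:%R (@Psi D) (@Psi_linear D).
Section Props.
Variable D : finType.
Local Notation T := (ptree D).

Lemma eq_mone (F : forest D) : (F == mone) = (fmonom_val F == [::]).
Proof. by rewrite fmP fm1. Qed.

Lemma mone_FM : (mone : forest D) = FMonom [::].
Proof. by apply/esym/eqP; rewrite eq_mone. Qed.

Lemma PsiU (c : rat) (k : forest D) G : (Psi << c *g k >>)@_G = c * prF k G.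
Proof. by rewrite (PsiEw _ msuppU_le) big_seq_fset1 mcoeffUU. Qed.

Lemma PsiU1 (k : forest D) G : (Psi << k >>)@_G = prF k G.
Proof. by rewrite PsiU mul1r. Qed.

Lemma malgU_scale (c : rat) (k : forest D) : << c *g k >> = c *: << k >> :> HPR D.
Proof. apply/malgP => k'; rewrite mcoeffZ !mcoeffU; by case: eqP; rewrite ?mulr1 ?mulr0. Qed.

Lemma coef_sum (x : HPR D) G :
  \sum_(F <- msupp x) x@_F * (F == G)%:R = x@_G.
Proof.
rewrite [in RHS](monalgE x) raddf_sum /=; apply: eq_bigr => F _.
by rewrite mcoeffU; case: eqP; rewrite ?mulr1 ?mulr0.
Qed.

Lemma Psi_sum (I : Type) (r : seq I) (f : I -> HPR D) :
  Psi (\sum_(i <- r) f i) = \sum_(i <- r) Psi (f i).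
Proof. exact: raddf_sum. Qed.

Lemma mcoeff_sum (I : Type) (r : seq I) (f : I -> HPRgd D) G :
  (\sum_(i <- r) f i)@_G = \sum_(i <- r) (f i)@_G.
Proof. exact: raddf_sum. Qed.

Lemma Psi_alg : is_alg_morph (Psi (D := D)).
Proof.
split.
  move=> F; have -> : (1 : HPR D) = << (mone : forest D) >> by [].
  by rewrite /dval PsiU1 /prF fm1 pr_nil eq_mone.
move=> x y G; rewrite /dval cutsE big_map /=.
rewrite malgME Psi_sum mcoeff_sum.
transitivity (\sum_(k1 <- msupp x) \sum_(k2 <- msupp y)
   \sum_(c <- cutsS G) (x@_k1 * prF k1 (FMonom c.1)) * (y@_k2 * prF k2 (FMonom c.2))).
  apply: eq_bigr => k1 _; rewrite Psi_sum mcoeff_sum; apply: eq_bigr => k2 _.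
  rewrite PsiU /prF fmM pr_cat mulr_sumr; apply: eq_bigr => c _ /=.
  by rewrite mulrACA.
transitivity (\sum_(c <- cutsS G) \sum_(k1 <- msupp x) \sum_(k2 <- msupp y)
   (x@_k1 * prF k1 (FMonom c.1)) * (y@_k2 * prF k2 (FMonom c.2))).
  under eq_bigr => k1 _ do rewrite exchange_big /=.
  by rewrite exchange_big.
apply: eq_bigr => c _; rewrite !PsiE mulr_suml; apply: eq_bigr => k1 _.
by rewrite mulr_sumr.
Qed.

Lemma Psi_counit (x : HPR D) : (Psi x)@_mone = x@_mone.
Proof.
rewrite PsiE; under eq_bigr => F _ do rewrite /prF fm1 pr_G0 -eq_mone.
exact: coef_sum.
Qed.

Lemma Psi_coalg : is_coalg_morph (Psi (D := D)).
Proof.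
split.
  by move=> x; rewrite /dval Psi_counit.
move=> K F G; rewrite /dval PsiU1 /prF fmM pr_coalg cutsE [RHS]big_map.
by under [RHS]eq_bigr => c _ do rewrite !PsiU1.
Qed.

Lemma gammaE d (G : forest D) : gamma d G = omap (@FMonom _) (gammaS d G).
Proof. by rewrite /gamma /gammaS; case: rev => //= t r; case: eqP. Qed.

Lemma prF_tree t (G : forest D) : prF (FMonom [:: t]) G = prt t G.
Proof. exact: pr1. Qed.

Lemma Bplus_raw (d : D) (x : HPR D) (G : forest D) : (Psi (Bplus d x))@_G = gamma_gd d (Psi x) G.
Proof.
rewrite /Bplus /gamma_gd Psi_sum mcoeff_sum gammaE.
under eq_bigr => F _ do rewrite linearZ /= mcoeffZ PsiU1 prF_tree prtE.
case: gammaS => [G'|] /=; last by rewrite big1 // => F _; rewrite mulr0.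
by rewrite /dval PsiE.
Qed.

Lemma Bplus_Psi : Bplus_compat (Psi (D := D)).
Proof. move=> d x G; exact: Bplus_raw. Qed.

Lemma Psi_graded : is_graded (Psi (D := D)).
Proof.
move=> F G; rewrite /dval PsiU1 /prF => /pr_graded.
by rewrite -!fweightE.
Qed.

Lemma Psi_unique (Psi' : {linear HPR D -> HPRgd D}) :
  is_hopf_morph Psi' -> Bplus_compat Psi' -> Psi' =1 Psi (D := D).
Proof.
move=> [[H1 H2] _] HB.
have key : forall s G, (Psi' << FMonom s >>)@_G = pr s G.
  elim/forest_ind => [|d ch s IHch IHs] G.
    have -> : << FMonom [::] >> = 1 :> HPR D by rewrite -mone_FM.
    by move: (H1 G); rewrite /dval eq_mone pr_nil.
  have -> : << FMonom (PNode d ch :: s) >> =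
            Bplus d << FMonom ch >> * << FMonom s >> :> HPR D.
    rewrite /Bplus msuppU1 big_seq_fset1 mcoeffUU scale1r.
    rewrite malgM_def fgmulUU mulr1; congr << _ >>.
    by apply/eqP; rewrite fmP fmM.
  move: (H2 (Bplus d << FMonom ch >>) << FMonom s >> G); rewrite /dval => ->.
  rewrite pr_cons cutsE big_map; apply: eq_bigr => c _.
  move: (HB d << FMonom ch >> (FMonom c.1)); rewrite /dval => ->.
  rewrite IHs /gamma_gd gammaE prtE; case: gammaS => // G' /=.
  by rewrite /dval IHch.
move=> x; apply/malgP => G.
rewrite {1}(monalgE x) raddf_sum /= raddf_sum PsiE /=; apply: eq_bigr => F _.
rewrite malgU_scale linearZ /= mcoeffZ; congr (_ * _).
by move: (key (fmonom_val F) G); rewrite fmK.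
Qed.

End Props.
Section Surj.
Variable D : finType.
Local Notation T := (ptree D).

Definition lastw (s : seq T) : nat := if rev s is t :: _ then tweight t else 0.

Lemma lastw_rcons (s : seq T) (t : T) : lastw (rcons s t) = tweight t.
Proof. by rewrite /lastw rev_rcons. Qed.

Lemma wt_pos (s : seq T) : s != [::] -> (0 < wt s)%N.
Proof. by case: s => // -[d ch] s _; rewrite wt_cons tweightE. Qed.

Lemma cutsS_empty (s : seq T) : ([::], s) \in cutsS s.
Proof.
elim/forest_ind: s => [|d ch s IHch IHs]; first by rewrite mem_seq1.
rewrite cutsS_cons; apply/allpairsP; exists (([::], [:: PNode d ch]), ([::], s)) => /=.
split => //; rewrite cutsS_tree inE; apply/orP; right.
by apply/mapP; exists ([::], ch).
Qed.

Lemma cutsS_total (s : seq T) : (s, [::]) \in cutsS s.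
Proof.
elim: s => [|t s IHs]; first by rewrite mem_seq1.
rewrite cutsS_cons; apply/allpairsP; exists (([:: t], [::]), (s, [::])) => /=.
by split => //; case: t => d ch; rewrite cutsS_tree mem_head.
Qed.

Lemma key_last (G' H : seq T) (d : D) (F : seq T) (c : seq T * seq T) :
  c \in cutsS F -> c.1 = H -> c.2 = rcons G' (PNode d [::]) ->
  F = rcons G' (PNode d H) \/ (lastw F <= wt H)%N.
Proof.
case/lastP: F => [|F0 f]; first by rewrite mem_seq1 => /eqP -> /= _; case: G'.
rewrite -cats1 cutsS_cat => /allpairsP [[[a1 a2] [b1 b2]] [/= Ha + ->]] /=.
case: f => e ch; rewrite cutsS_tree inE => /predU1P [[-> ->]|].
  move=> <- _; right; rewrite cats1 lastw_rcons wt_cat /wt /=; lia.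
move=> /mapP [[x1 x2] Hx [-> ->]] /= <-; rewrite cats1 => /eqP.
rewrite eqseq_rcons => /andP [/eqP Ea2 /eqP [Ee Ex2]].
move: (cutsS_R0 Hx Ex2) => /= Ex1; subst x1 e x2 a2.
case: (altP (a1 =P [::])) => [Ea1|Na1].
  by left; move: (cutsS_P0 Ha Ea1) => /= ->; rewrite Ea1 cats1.
right; rewrite cats1 lastw_rcons tweightE wt_cat; move: (wt_pos Na1); lia.
Qed.

Definition Im (f : HPRgd D) := exists x : HPR D, Psi x = f.

Lemma Im_lin a f g : Im f -> Im g -> Im (a *: f + g).
Proof. by move=> [x <-] [y <-]; exists (a *: x + y); rewrite linearP. Qed.

Lemma Im0 : Im 0.
Proof. by exists 0; rewrite linear0. Qed.

Lemma Im_sum (r : seq (forest D)) (P : pred (forest D)) (a : forest D -> rat) :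
  (forall F, F \in r -> P F -> Im << F >>) ->
  Im (\sum_(F <- r | P F) a F *: << F >>).
Proof.
elim: r => [|F r IH] H; first by rewrite big_nil; exact: Im0.
rewrite big_cons; case: ifP => PF; last by apply: IH => G GR; apply: H; rewrite inE GR orbT.
by apply: Im_lin; [apply: H; rewrite ?mem_head | apply: IH => G GR; apply: H; rewrite inE GR orbT].
Qed.

Lemma sum_count (r : seq (seq T * seq T)) p :
  \sum_(c <- r) (c == p)%:R = (count_mem p r)%:R :> rat.
Proof.
elim: r => [|c r IH]; first by rewrite big_nil.
by rewrite big_cons IH /= natrD eq_sym.
Qed.

Lemma Psi_one : Psi (1 : HPR D) = << FMonom [::] >>.
Proof.
apply/malgP => G; have := (Psi_alg D).1 G; rewrite /dval => ->.
by rewrite mcoeffU1 mone_FM eq_sym.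
Qed.

Lemma Psi_mulUU (x y : HPR D) (A B : seq T) :
  Psi x = << FMonom A >> -> Psi y = << FMonom B >> ->
  forall G : forest D, (Psi (x * y))@_G = (count_mem (A, B) (cutsS G))%:R.
Proof.
move=> Hx Hy G; have := (Psi_alg D).2 x y G; rewrite /dval => ->.
rewrite Hx Hy cutsE big_map -sum_count; apply: eq_bigr => -[c1 c2] _ /=.
rewrite !mcoeffU1 /= -natrM; congr _%:R.
by rewrite !fmP /= xpair_eqE (eq_sym A) (eq_sym B); case: (c1 == A); case: (c2 == B).
Qed.

Lemma surj_seq (s : seq T) : Im << FMonom s >>.
Proof.
have [n] := ubnP (wt s); elim: n s => // n IHn s Hs.
have [m] := ubnP (lastw s); elim: m s Hs => // m IHm s Hs Hm.
case/lastP: s Hs Hm => [|G' [d H]] Hs Hm.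
  by exists 1; exact: Psi_one.
have HwG : wt (rcons G' (PNode d H)) = (wt G' + (wt H).+1)%N.
  by rewrite -cats1 wt_cat /wt /= addn0.
case: (altP (H =P [::])) => [EH|NH].
  subst H; have lG : (wt G' < n)%N by rewrite HwG in Hs; lia.
  have [x' Hx'] := IHn G' lG.
  exists (Bplus d x'); apply/malgP => F.
  rewrite Bplus_raw /gamma_gd gammaE Hx' mcoeffU1.
  case E: gammaS => [F'|] /=.
    by rewrite /dval mcoeffU1 !fmP /= (gammaS_Some E) eqseq_rcons eqxx andbT.
  rewrite fmP /=; case: eqP => // EF; move: E; rewrite -EF gammaS_rcons eqxx //.
have wH := wt_pos NH.
have lH : (wt H < n)%N by rewrite HwG in Hs; lia.
have [xH HxH] := IHn H lH.
have lG : (wt (rcons G' (PNode d [::])) < n)%N.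
  rewrite HwG in Hs; rewrite -cats1 wt_cat (_ : wt [:: PNode d [::]] = 1%N) //; lia.
have [xG HxG] := IHn _ lG.
set y := xH * xG.
have Ny : forall F, (Psi y)@_F = (count_mem (H, rcons G' (PNode d [::])) (cutsS F))%:R.
  exact: Psi_mulUU.
set G := FMonom (rcons G' (PNode d H)).
have NG : (Psi y)@_G != 0.
  rewrite Ny Num.Theory.pnatr_eq0 -lt0n -has_count; apply/hasP.
  exists (H, rcons G' (PNode d [::])); last by rewrite /= eqxx.
  rewrite /G /= -!cats1 cutsS_cat; apply/allpairsP.
  exists (([::], G'), (H, [:: PNode d [::]])); split => //=.
  - exact: cutsS_empty.
  - by rewrite cutsS_tree inE; apply/orP; right; apply/mapP; exists (H, [::]); rewrite ?cutsS_total.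
have Hrest : Im (\sum_(F <- msupp (Psi y) | F != G) (Psi y)@_F *: << F >>).
  apply: Im_sum => F FS FG.
  have : (Psi y)@_F != 0 by rewrite mcoeff_neq0.
  rewrite Ny Num.Theory.pnatr_eq0 -lt0n -has_count => /hasP [[c1 c2] Hc /eqP [E1 E2]].
  have Hw := cutsS_wt Hc; rewrite /= E1 E2 -cats1 wt_cat /= in Hw.
  have := key_last Hc E1 E2; case=> [EF|HL].
    by move: FG; rewrite /G -EF; case: F {FS Hc Hw EF} => F; rewrite eqxx.
  rewrite -(fmK F); apply: IHm.
  - move: Hs Hw; rewrite HwG wt_cons tweightE /wt /=; lia.
  - move: Hm HL; rewrite lastw_rcons tweightE; lia.
have Hy : Im (Psi y) by exists y.
have E : Psi y = (Psi y)@_G *: << G >> +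
    \sum_(F <- msupp (Psi y) | F != G) (Psi y)@_F *: << F >>.
  have E0 := monalgE (Psi y).
  rewrite {1}E0 (bigD1_seq G) /=; [| by rewrite -mcoeff_neq0 | exact: fset_uniq].
  rewrite malgU_scale; congr (_ + _); apply: eq_bigr => F _.
  exact: malgU_scale.
have := Im_lin ((Psi y)@_G)^-1 (Im_lin (- 1) Hrest Hy) Im0.
set R := \sum_(F <- msupp (Psi y) | F != G) _ in E Hrest *.
set c := (Psi y)@_G in E NG *.
rewrite addr0 scaleN1r E addrCA addNr addr0 scalerA mulVf // scale1r.
done.
Qed.


End Surj.
Lemma sum_supp_gen (K : eqType) (S e : seq K) (g : K -> rat) :
  uniq S -> uniq e -> (forall F, g F != 0 -> (F \in S) && (F \in e)) ->
  \sum_(F <- S) g F = \sum_(F <- e) g F.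
Proof.
move=> uS ue Hg.
rewrite (bigID (mem e)) [RHS](bigID (mem S)) /=.
have -> : \sum_(i <- S | i \notin e) g i = 0.
  rewrite big1 // => F FnE; apply/eqP; apply: contraT => /Hg /andP [_].
  by rewrite (negPf FnE).
have -> : \sum_(i <- e | i \notin S) g i = 0.
  rewrite big1 // => F FnS; apply/eqP; apply: contraT => /Hg /andP [].
  by rewrite (negPf FnS).
rewrite !addr0 -big_filter -[RHS]big_filter.
apply: perm_big; apply: uniq_perm; rewrite ?filter_uniq //.
by move=> F; rewrite !mem_filter andbC.
Qed.

Section Bij.
Variable D : finType.
Local Notation T := (ptree D).

Lemma surj_all (f : HPRgd D) : Im f.
Proof.
rewrite (monalgE f).
have -> : \sum_(k <- msupp f) << f@_k *g k >> =
          \sum_(k <- msupp f | true) f@_k *: << k >> :> HPRgd D.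
  by apply: eq_bigr => k _; rewrite malgU_scale.
by apply: Im_sum => F _ _; rewrite -(fmK F); apply: surj_seq.
Qed.

Lemma Psi_restrict (y : HPR D) (G : forest D) :
  (Psi y)@_G = \sum_(F <- fenum D (fweight G)) y@_F * prF F G.
Proof.
rewrite PsiE; apply: sum_supp_gen; rewrite ?fset_uniq ?fenum_uniq // => F.
rewrite mulf_eq0 negb_or => /andP [yF /pr_graded HW].
apply/andP; split; first by rewrite -mcoeff_neq0.
by rewrite mem_fenum !fweightE HW.
Qed.

Lemma Psi_inj : injective (Psi (D := D)).
Proof.
have inj0 : forall x : HPR D, Psi x = 0 -> x = 0.
  move=> x Hx; apply/malgP => F0; rewrite mcoeff0.
  set n := fweight F0; set e := fenum D n; set N := size e.
  have F0e : F0 \in e by rewrite mem_fenum.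
  pose ef (i : 'I_N) := nth F0 e i.
  have exP : forall G : forest D, exists y : HPR D, Psi y == << G >>.
    by move=> G; have [y Hy] := surj_all << G >>; exists y; apply/eqP.
  pose yf (G : forest D) := xchoose (exP G).
  have yfP : forall G, Psi (yf G) = << G >> by move=> G; apply/eqP/(xchooseP (exP G)).
  pose M := \matrix_(i < N, j < N) prF (ef i) (ef j).
  pose Y := \matrix_(i < N, j < N) (yf (ef i))@_(ef j).
  have sumE : forall (z : HPR D) k, \sum_(j < N) z@_(ef j) * prF (ef j) (ef k) = (Psi z)@_(ef k).
    move=> z k; have ek : ef k \in e by rewrite /ef mem_nth.
    rewrite Psi_restrict (_ : fweight (ef k) = n); last by move: ek; rewrite mem_fenum => /eqP.
    by rewrite (big_nth F0) big_mkord.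
  have YM : Y *m M = 1%:M.
    apply/matrixP => i k; rewrite !mxE.
    under eq_bigr => j _ do rewrite !mxE.
    rewrite sumE yfP mcoeffU1 nth_uniq ?fenum_uniq //.
  have MY := mulmx1C YM.
  pose v := \row_(j < N) x@_(ef j).
  have v0 : v *m M = 0.
    apply/rowP => k; rewrite !mxE.
    under eq_bigr => j _ do rewrite !mxE.
    by rewrite sumE Hx mcoeff0.
  have : v = 0 by rewrite -[v]mulmx1 -MY mulmxA v0 mul0mx.
  have iF0 : (index F0 e < N)%N by rewrite index_mem.
  move/rowP => /(_ (Ordinal iF0)); rewrite !mxE => <-.
  by rewrite /ef /= nth_index.
move=> x y Hxy; apply/eqP; rewrite -subr_eq0; apply/eqP/inj0.
by rewrite linearB /= Hxy subrr.
Qed.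

End Bij.
Lemma Psi_bij (D : finType) : bijective (@Psi D).
Proof.
have exP : forall f : HPRgd D, exists x : HPR D, Psi x == f.
  by move=> f; have [x Hx] := surj_all f; exists x; apply/eqP.
exists (fun f => xchoose (exP f)) => [x|f]; last exact/eqP/(xchooseP (exP f)).
by apply: Psi_inj; apply/eqP/(xchooseP (exP (Psi x))).
Qed.

Unset Implicit Arguments.
Set Strict Implicit.
Set Printing Implicit Defensive.

Theorem mainTheorem3 (D : finType) (hD : (0 < #|D|)%N) :
  exists Psi : {linear HPR D -> HPRgd D},
    [/\ is_hopf_morph Psi, Bplus_compat Psi,
        (forall Psi' : {linear HPR D -> HPRgd D},
            is_hopf_morph Psi' -> Bplus_compat Psi' -> Psi' =1 Psi),
        bijective Psi & is_graded Psi].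
Proof.
exists (@Psi D); split.
- by split; [exact: Psi_alg | exact: Psi_coalg].
- exact: Bplus_Psi.
- by move=> Psi' H1 H2; apply: Psi_unique.
- exact: Psi_bij.
- exact: Psi_graded.
Qed.
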